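(* Let $k=\mathbb{R}$ or $\mathbb{C}$, let $(V,g)$ be an inner product vector space over $k$, and let $f\in\operatorname{End}_k(V)$ be admissible for the Moore-Penrose inverse. Let $\mathcal H_f=\{H_i\}_{i\in I}$ be a family of finite-dimensional $f$-invariant subspaces of $V$ with $V=\bigoplus_{i\in I}H_i$, and write $f_i=f|_{H_i}$. Then $f^+_{\mathcal H_f}=f^\dagger$ if and only if the following two conditions hold: (1) $[\operatorname{Im} f_i]_i^\perp\subseteq\big[\sum_{j\ne i}\operatorname{Im} f_j\big]^\perp$ for every $i\in I$; (2) $[\operatorname{Ker} f_i]_i^\perp\subseteq\big[\sum_{j\ne i}\operatorname{Ker} f_j\big]^\perp$ for every $i\in I$.
   Context: An inner product $g$ on a $k$-vector space is linear in the first argument, conjugate-symmetric and positive definite; $U^\perp=\{v\in V:g(u,v)=0\ \forall u\in U\}$. $V=\bigoplus_{i\in I}H_i$ means the natural map $\bigoplus_{i\in I} H_i\to V$, $(v_i)\mapsto\sum v_i$, is an isomorphism. A linear map $f\colon V\to W$ between inner product spaces is admissible for the Moore-Penrose inverse if $V=\operatorname{Ker} f\oplus[\operatorname{Ker} f]^\perp$ and $W=\operatorname{Im} f\oplus[\operatorname{Im} f]^\perp$; its Moore-Penrose inverse $f^\dagger\colon W\to V$ is the linear map equal to $(f|_{[\operatorname{Ker} f]^\perp})^{-1}$ on $\operatorname{Im} f$ and to $0$ on $[\operatorname{Im} f]^\perp$ (equivalently, the unique reflexive generalized inverse $f^\dagger$ of $f$ with $f^\dagger\circ f$ and $f\circ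 f^\dagger$ self-adjoint). For a subspace $U\subseteq H_i$, $[U]_i^\perp=\{v\in H_i: g(u,v)=0\ \forall u\in U\}$. Each $f_i\in\operatorname{End}_k(H_i)$ with $H_i$ carrying the restricted inner product has a Moore-Penrose inverse $f_i^\dagger$ (as $H_i$ is finite-dimensional). The reflexive generalized inverse of $f$ associated with $\mathcal H_f$ is the unique linear map $f^+_{\mathcal H_f}\in\operatorname{End}_k(V)$ with $f^+_{\mathcal H_f}|_{H_i}=f_i^\dagger$ for every $i\in I$. *)

(* Defs.v *)
From mathcomp Require Import all_boot all_algebra.
From mathcomp Require Import reals.
From mathcomp.real_closed Require Import complex.
From Stdlib Require List.
Set Implicit Arguments. Unset Strict Implicit. Unset Printing Implicit Defensive.
Import GRing.Theory Num.Theory.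
Local Open Scope ring_scope.

Section InnerProductSpaces.
Variables (k : numFieldType) (conj : k -> k) (V : lmodType k).

Definition inner_product (g : V -> V -> k) : Prop :=
  [/\ (forall a u u' v, g (a *: u + u') v = a * g u v + g u' v),
      (forall u v, g u v = conj (g v u)) &
      (forall v, v != 0 -> 0 < g v v)].

Definition subspace (U : V -> Prop) : Prop :=
  [/\ U 0, (forall u v, U u -> U v -> U (u + v)) &
      (forall (a : k) u, U u -> U (a *: u))].

Definition orth (g : V -> V -> k) (U : V -> Prop) : V -> Prop :=
  fun v => forall u, U u -> g u v = 0.

Definition orth_in (g : V -> V -> k) (Hi U : V -> Prop) : V -> Prop :=
  fun v => Hi v /\ forall u, U u -> g u v = 0.

Definition direct_sum2 (A B : V -> Prop) : Prop :=
  (forall v, exists a b, [/\ A a, B b & v = a + b]) /\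
  (forall a b, A a -> B b -> a + b = 0 -> a = 0 /\ b = 0).

(* V = (+)_{i in I} H_i : the natural map from the external direct sum
   (finitely supported families (v_i), v_i in H_i) to V, (v_i) |-> sum v_i,
   is bijective. Finitely supported families are given by a duplicate-free
   list s of indices and values w i (i in s). *)
Definition direct_sum_family (I : Type) (H : I -> V -> Prop) : Prop :=
  (forall v, exists (s : seq I) (w : I -> V),
      (forall i, H i (w i)) /\ v = \sum_(i <- s) w i) /\
  (forall (s : seq I) (w : I -> V), List.NoDup s ->
      (forall i, List.In i s -> H i (w i)) ->
      \sum_(i <- s) w i = 0 -> forall i, List.In i s -> w i = 0).

Definition fin_dim (U : V -> Prop) : Prop :=
  exists s : seq V, forall v,
    U v <-> exists c : 'I_(size s) -> k, v = \sum_(j < size s) c j *: s`_j.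

Definition invariant (f : V -> V) (U : V -> Prop) : Prop :=
  forall v, U v -> U (f v).

Definition Ker (f : V -> V) : V -> Prop := fun v => f v = 0.
Definition Im (f : V -> V) : V -> Prop := fun w => exists v, w = f v.

Definition Ker_on (f : V -> V) (Hi : V -> Prop) : V -> Prop :=
  fun v => Hi v /\ f v = 0.
Definition Im_on (f : V -> V) (Hi : V -> Prop) : V -> Prop :=
  fun w => exists v, Hi v /\ w = f v.

Definition sum_except (I : Type) (U : I -> V -> Prop) (i : I) : V -> Prop :=
  fun w => exists (s : seq I) (u : I -> V),
    [/\ (forall j, List.In j s -> j <> i),
        (forall j, List.In j s -> U j (u j)) &
        w = \sum_(j <- s) u j].

Definition included (A B : V -> Prop) : Prop := forall v, A v -> B v.

Definition MP_admissible (g : V -> V -> k) (f : V -> V) : Prop :=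
  direct_sum2 (Ker f) (orth g (Ker f)) /\ direct_sum2 (Im f) (orth g (Im f)).

(* h is the Moore-Penrose inverse f^dagger of f: h is (f|_{Ker f^perp})^{-1}
   on Im f and 0 on (Im f)^perp *)
Definition is_MP_inverse (g : V -> V -> k) (f h : V -> V) : Prop :=
  (forall v, orth g (Ker f) v -> h (f v) = v) /\
  (forall w, orth g (Im f) w -> h w = 0).

(* h restricted to H_i equals the Moore-Penrose inverse f_i^dagger of
   f_i = f|_{H_i} on H_i (with the restricted inner product): it is
   (f_i|_{[Ker f_i]_i^perp})^{-1} on Im f_i and 0 on [Im f_i]_i^perp *)
Definition restricts_to_MP_on (g : V -> V -> k) (f h : V -> V)
    (Hi : V -> Prop) : Prop :=
  (forall v, orth_in g Hi (Ker_on f Hi) v -> h (f v) = v) /\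
  (forall w, orth_in g Hi (Im_on f Hi) w -> h w = 0).

Definition is_assoc_inverse (g : V -> V -> k) (f h : V -> V)
    (I : Type) (H : I -> V -> Prop) : Prop :=
  forall i, restricts_to_MP_on g f h (H i).

End InnerProductSpaces.

Definition Theorem_3_20_over (k : numFieldType) (conj : k -> k) : Prop :=
  forall (V : lmodType k) (g : V -> V -> k) (f : {linear V -> V})
         (I : Type) (H : I -> V -> Prop) (fdag fplus : {linear V -> V}),
    inner_product conj g ->
    MP_admissible g f ->
    (forall i, subspace (H i)) ->
    (forall i, fin_dim (H i)) ->
    (forall i, invariant f (H i)) ->
    direct_sum_family H ->
    is_MP_inverse g f fdag ->
    is_assoc_inverse g f fplus H ->
    (fplus =1 fdag <->
       ((forall i, included (orth_in g (H i) (Im_on f (H i)))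
                            (orth g (sum_except (fun j => Im_on f (H j)) i)))
     /\ (forall i, included (orth_in g (H i) (Ker_on f (H i)))
                            (orth g (sum_except (fun j => Ker_on f (H j)) i))))).

(* Main.v *)
Require Import Defs.
From mathcomp Require Import all_boot all_order all_algebra.
From mathcomp Require Import reals.
From mathcomp.real_closed Require Import complex.
From Stdlib Require Import Classical ClassicalEpsilon IndefiniteDescription.
From Stdlib Require List.
Set Implicit Arguments. Unset Strict Implicit. Unset Printing Implicit Defensive.
Import Order.TTheory GRing.Theory Num.Theory.
Local Open Scope ring_scope.

Lemma app_cat (T : Type) (l1 l2 : seq T) : List.app l1 l2 = l1 ++ l2.
Proof. by elim: l1 => //= x l ->. Qed.

Lemma big_eq_In (T : zmodType) (I : Type) (s : seq I) (F G : I -> T) :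
  (forall j, List.In j s -> F j = G j) -> \sum_(j <- s) F j = \sum_(j <- s) G j.
Proof.
elim: s => [|x s IH] h; first by rewrite !big_nil.
rewrite !big_cons h /=; last by left.
by rewrite IH // => j hj; apply: h; right.
Qed.

Lemma big0_In (T : zmodType) (I : Type) (s : seq I) (F : I -> T) :
  (forall j, List.In j s -> F j = 0) -> \sum_(j <- s) F j = 0.
Proof.
move=> h; rewrite (big_eq_In (G := fun _ => 0)) //.
by elim: s {h} => [|x s IH]; rewrite ?big_nil ?big_cons ?IH ?addr0.
Qed.

Section Gen.
Variables (k : numFieldType) (conj : {rmorphism k -> k}) (V : lmodType k).

Lemma subspB (U : V -> Prop) u v : subspace U -> U u -> U v -> U (u - v).
Proof. by case=> h0 hD hZ hu hv; rewrite -scaleN1r; apply: hD => //; apply: hZ. Qed.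

Lemma subsp_sum (U : V -> Prop) (I : Type) (s : seq I) (F : I -> V) :
  subspace U -> (forall j, List.In j s -> U (F j)) -> U (\sum_(j <- s) F j).
Proof.
case=> h0 hD hZ; elim: s => [|x s IH] h; first by rewrite big_nil.
rewrite big_cons; apply: hD; first by apply: h; left.
by apply: IH => j hj; apply: h; right.
Qed.

Fixpoint inspan (s : seq V) (v : V) : Prop :=
  match s with
  | [::] => v = 0
  | x :: t => exists a w, inspan t w /\ v = a *: x + w
  end.

Lemma inspan_sub s : subspace (inspan s).
Proof.
elim: s => [|x s [h0 hD hZ]] /=; split.
- by [].
- by move=> u v -> ->; rewrite addr0.
- by move=> a u ->; rewrite scaler0.
- by exists 0, 0; rewrite scale0r addr0.
- move=> u v [a [w [hw ->]]] [b [w' [hw' ->]]]; exists (a + b), (w + w'); split.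
    exact: hD.
  by rewrite scalerDl addrACA.
- move=> c u [a [w [hw ->]]]; exists (c * a), (c *: w); split; first exact: hZ.
  by rewrite scalerDr scalerA.
Qed.

Lemma inspan_sum s (c : 'I_(size s) -> k) : inspan s (\sum_(j < size s) c j *: s`_j).
Proof.
elim: s c => [|x s IH] c /=; first by rewrite big_ord0.
rewrite big_ord_recl; eexists _, _; split; first exact: (IH (c \o lift ord0)).
by [].
Qed.

Lemma inspan_map (f : {linear V -> V}) s v : inspan s v -> inspan (map f s) (f v).
Proof.
elim: s v => [|x s IH] v /=; first by move=> ->; rewrite linear0.
move=> [a [w [hw ->]]]; exists a, (f w); split; first exact: IH.
by rewrite linearD linearZ.
Qed.

Lemma fs_sub s (U : V -> Prop) : subspace U -> (forall u, U u -> inspan s u) ->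
  exists t, forall u, U u <-> inspan t u.
Proof.
elim: s U => [|x s IH] U hU hsub.
  exists [::] => u; split; first exact: hsub.
  by move=> /= ->; case: hU.
have [h0 hD hZ] := hU.
have [hs0 hsD hsZ] := inspan_sub s.
pose U' := fun u => U u /\ inspan s u.
have hU' : subspace U'.
  split; first by split.
    by move=> u v [hu hu'] [hv hv']; split; [apply: hD | apply: hsD].
  by move=> a u [hu hu']; split; [apply: hZ | apply: hsZ].
have [t' ht'] := IH U' hU' (fun u h => h.2).
case: (classic (exists u0, U u0 /\ ~ inspan s u0)) => [[u0 [hu0 hn]] | hno].
  have [a [w0 [hw0 e0]]] := hsub u0 hu0.
  have a0 : a != 0.
    by apply/eqP => a0; apply: hn; rewrite e0 a0 scale0r add0r.
  exists (u0 :: t') => u; split.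
    move=> hu; have [b [w [hw e]]] := hsub u hu.
    exists (b / a), (u - (b / a) *: u0); split; last by rewrite addrC subrK.
    apply/ht'; split; first by apply: subspB => //; apply: hZ.
    rewrite [X in inspan _ (X - _)]e e0 scalerDr scalerA divfK //.
    rewrite opprD addrACA subrr add0r.
    by apply: subspB => //; apply: hsZ.
  case=> [c [r [hr ->]]]; have [hUr _] := (ht' r).2 hr.
  by apply: hD => //; apply: hZ.
exists t' => u; split.
  move=> hu; apply/ht'; split => //; apply: NNPP => hn; apply: hno.
  by exists u.
by move=> /ht' [].
Qed.

Variable (g : V -> V -> k).
Hypothesis hg : inner_product conj g.

Lemma gDl u u' v : g (u + u') v = g u v + g u' v.
Proof. by case: hg => h _ _; rewrite -[u]scale1r h mul1r scale1r. Qed.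

Lemma g0l v : g 0 v = 0.
Proof.
have := gDl 0 0 v; rewrite addr0 => /eqP.
by rewrite -{1}[g 0 v]addr0 (inj_eq (addrI _)) eq_sym => /eqP.
Qed.

Lemma gZl a u v : g (a *: u) v = a * g u v.
Proof. by case: hg => h _ _; rewrite -[a *: u]addr0 h g0l addr0. Qed.

Lemma gNl u v : g (- u) v = - g u v.
Proof. by rewrite -scaleN1r gZl mulN1r. Qed.

Lemma gBl u u' v : g (u - u') v = g u v - g u' v.
Proof. by rewrite gDl gNl. Qed.

Lemma gsym u v : g u v = conj (g v u).
Proof. by case: hg. Qed.

Lemma gDr u v v' : g u (v + v') = g u v + g u v'.
Proof. by rewrite gsym gDl rmorphD -!gsym. Qed.

Lemma g0r u : g u 0 = 0.
Proof. by rewrite gsym g0l rmorph0. Qed.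

Lemma gZr a u v : g u (a *: v) = conj a * g u v.
Proof. by rewrite gsym gZl rmorphM -gsym. Qed.

Lemma gNr u v : g u (- v) = - g u v.
Proof. by rewrite gsym gNl rmorphN -gsym. Qed.

Lemma gBr u v v' : g u (v - v') = g u v - g u v'.
Proof. by rewrite gDr gNr. Qed.

Lemma gsuml (I : Type) (s : seq I) (F : I -> V) v :
  g (\sum_(j <- s) F j) v = \sum_(j <- s) g (F j) v.
Proof. elim: s => [|x s IH]; by rewrite ?big_nil ?g0l // !big_cons gDl IH. Qed.

Lemma gsumr (I : Type) (s : seq I) (F : I -> V) v :
  g v (\sum_(j <- s) F j) = \sum_(j <- s) g v (F j).
Proof. elim: s => [|x s IH]; by rewrite ?big_nil ?g0r // !big_cons gDr IH. Qed.

Lemma gdef v : g v v = 0 -> v = 0.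
Proof.
move=> h; apply/eqP; apply: contraT => hv.
by case: hg => _ _ /(_ v hv); rewrite h ltxx.
Qed.

Lemma gs t v : exists a, inspan t a /\ forall u, inspan t u -> g u (v - a) = 0.
Proof.
elim: t v => [|y t IH] v.
  by exists 0; split => // u /= ->; rewrite g0l.
have [hs0 hsD hsZ] := inspan_sub t.
have [ay [hay oy]] := IH y.
have [av [hav ov]] := IH v.
case: (eqVneq (y - ay) 0) => [y0 | yn0].
  have eyy : y = ay by apply/eqP; rewrite -subr_eq0 y0.
  exists av; split; first by exists 0, av; rewrite scale0r add0r.
  move=> u [b [w [hw ->]]].
  by rewrite eyy gDl gZl !ov // mulr0 add0r.
pose y' := y - ay; pose v' := v - av.
have d0 : g y' y' != 0.
  by case: hg => _ _ /(_ y' yn0) /lt0r_neq0.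
pose c := g v' y' / g y' y'.
exists (av + c *: y'); split.
  exists c, (av - c *: ay); split; first by apply: subspB => //; apply: hsZ.
  by rewrite /y' scalerBr addrCA.
have e : v - (av + c *: y') = v' - c *: y' by rewrite opprD addrA.
have k1 : forall z, inspan t z -> g z (v - (av + c *: y')) = 0.
  by move=> z hz; rewrite e gBr gZr ov // oy // mulr0 subr0.
move=> u [b [w [hw ->]]].
rewrite gDl gZl (k1 w hw) addr0.
have -> : y = y' + ay by rewrite /y' subrK.
rewrite gDl (k1 ay hay) addr0 e gsym gBl gZl /c divfK // subrr rmorph0.
by rewrite mulr0.
Qed.

Lemma dec (Hs U : V -> Prop) s : subspace Hs -> (forall v, Hs v -> inspan s v) ->
  subspace U -> (forall u, U u -> Hs u) ->
  forall v, Hs v -> exists a b, [/\ U a, orth_in g Hs U b & v = a + b].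
Proof.
move=> hH hsp hU hUH v hv.
have [t ht] := fs_sub hU (fun u h => hsp u (hUH u h)).
have [a [ha oa]] := gs t v.
have hUa : U a by apply/ht.
exists a, (v - a); split => //; last by rewrite addrC subrK.
split; first by apply: subspB => //; apply: hUH.
by move=> u /ht; apply: oa.
Qed.

End Gen.

Lemma sum_cat (T : zmodType) (I : Type) (l1 l2 : seq I) (F : I -> T) :
  \sum_(j <- l1 ++ l2) F j = \sum_(j <- l1) F j + \sum_(j <- l2) F j.
Proof. exact: big_cat. Qed.

Definition upd (I T : Type) (i : I) (x : T) (f : I -> T) : I -> T :=
  fun j => if excluded_middle_informative (j = i) then x else f j.

Lemma upd_eq (I T : Type) (i : I) (x : T) f : upd i x f i = x.
Proof. by rewrite /upd; case: excluded_middle_informative. Qed.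

Lemma upd_neq (I T : Type) (i j : I) (x : T) f : j <> i -> upd i x f j = f j.
Proof. by rewrite /upd; case: excluded_middle_informative. Qed.

Lemma upd_P (I T : Type) (P : I -> T -> Prop) (i : I) (x : T) f :
  P i x -> (forall j, P j (f j)) -> forall j, P j (upd i x f j).
Proof.
move=> hx hf j; rewrite /upd; case: excluded_middle_informative => // ej.
by subst j.
Qed.

Section Main.
Variables (k : numFieldType) (conj : {rmorphism k -> k}) (V : lmodType k).

Lemma nodup_dec (I : Type) (H : I -> V -> Prop) : (forall i, subspace (H i)) ->
  forall (s : seq I) (w : I -> V), (forall i, H i (w i)) ->
  exists s' w', [/\ List.NoDup s', (forall i, H i (w' i)) &
                    \sum_(i <- s) w i = \sum_(i <- s') w' i].
Proof.
move=> hH; elim=> [|i s IH] w hw.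
  by exists [::], w; split => //; constructor.
have [s' [w' [nd hw' e]]] := IH w hw.
rewrite big_cons e.
case: (classic (List.In i s')) => hin.
  have [l1 [l2 el]] := List.in_split _ _ hin.
  have nin : ~ List.In i (List.app l1 l2).
    by apply: List.NoDup_remove_2; rewrite -el.
  exists s', (upd i (w i + w' i) w'); split => //.
    by apply: upd_P => //; case: (hH i) => _ hD _; apply: hD.
  have eq1 : forall l, (forall j, List.In j l -> j <> i) ->
      \sum_(j <- l) upd i (w i + w' i) w' j = \sum_(j <- l) w' j.
    by move=> l hl; apply: big_eq_In => j hj; rewrite upd_neq //; apply: hl.
  rewrite el app_cat sum_cat big_cons sum_cat big_cons !eq1.
rewrite (upd_eq i (w i + w' i) w').
  - by rewrite [LHS]addrCA !addrA.
  - by move=> j hj ej; apply: nin; rewrite -ej; apply: List.in_or_app; right.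
  - by move=> j hj ej; apply: nin; rewrite -ej; apply: List.in_or_app; left.
exists (i :: s'), (upd i (w i) w'); split.
- by constructor.
- exact: upd_P.
rewrite big_cons upd_eq; congr (_ + _).
apply: big_eq_In => j hj; rewrite upd_neq // => ej.
by apply: hin; rewrite -ej.
Qed.

End Main.

Section Thm.
Variables (k : numFieldType) (conj : {rmorphism k -> k}) (V : lmodType k).
Variables (g : V -> V -> k) (f : {linear V -> V}) (I : Type) (H : I -> V -> Prop)
          (fdag fplus : {linear V -> V}).
Hypotheses (hg : inner_product conj g) (hadm : MP_admissible g f)
  (hH : forall i, subspace (H i)) (hfd : forall i, fin_dim (H i))
  (hinv : forall i, Defs.invariant f (H i)) (hds : direct_sum_family H)
  (hdag : is_MP_inverse g f fdag) (hplus : is_assoc_inverse g f fplus H).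

Lemma Kdec v : exists a b, [/\ f a = 0, orth g (Defs.Ker f) b & v = a + b].
Proof. by case: hadm => [[h _] _]; have [a [b [? ? ?]]] := h v; exists a, b. Qed.

Lemma Mdec v : exists a b, [/\ Defs.Im f a, orth g (Defs.Im f) b & v = a + b].
Proof. by case: hadm => [_ [h _]]; have [a [b [? ? ?]]] := h v; exists a, b. Qed.

Lemma Hspan i : exists s, forall v, H i v -> inspan s v.
Proof.
have [s hs] := hfd i; exists s => v /hs [c ->]; exact: inspan_sum.
Qed.

Lemma Msub i : subspace (Im_on f (H i)).
Proof.
have [h0 hD hZ] := hH i; split.
- by exists 0; rewrite linear0.
- by move=> u v [x [hx ->]] [y [hy ->]]; exists (x + y); rewrite linearD; split => //; apply: hD.
- by move=> a u [x [hx ->]]; exists (a *: x); rewrite linearZ; split => //; apply: hZ.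
Qed.

Lemma Ksub i : subspace (Ker_on f (H i)).
Proof.
have [h0 hD hZ] := hH i; split.
- by split; rewrite ?linear0.
- by move=> u v [hu fu] [hv fv]; split; [apply: hD | rewrite linearD fu fv addr0].
- by move=> a u [hu fu]; split; [apply: hZ | rewrite linearZ /= fu scaler0].
Qed.

Lemma decM i v : H i v -> exists a b,
  [/\ Im_on f (H i) a, orth_in g (H i) (Im_on f (H i)) b & v = a + b].
Proof.
have [s hs] := Hspan i.
apply: (dec hg (s := s) (hH i) hs (Msub i)).
by move=> u [x [hx ->]]; apply: hinv.
Qed.

Lemma decK i v : H i v -> exists a b,
  [/\ Ker_on f (H i) a, orth_in g (H i) (Ker_on f (H i)) b & v = a + b].
Proof.
have [s hs] := Hspan i.
apply: (dec hg (s := s) (hH i) hs (Ksub i)).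
by move=> u [].
Qed.

Lemma ndec v : exists s w, [/\ List.NoDup s, (forall i, H i (w i)) &
                                v = \sum_(i <- s) w i].
Proof.
case: hds => hex _; have [s [w [hw e]]] := hex v.
have [s' [w' [nd hw' e']]] := nodup_dec hH s hw.
by exists s', w'; split => //; rewrite e e'.
Qed.

Lemma Min v : exists s x, (forall j, Im_on f (H j) (x j)) /\
   f v = \sum_(j <- s) x j.
Proof.
case: hds => hex _; have [s [w [hw e]]] := hex v.
exists s, (fun j => f (w j)); split; first by move=> j; exists (w j).
by rewrite e linear_sum.
Qed.

Lemma Kin z : f z = 0 -> exists s x, (forall j, List.In j s -> Ker_on f (H j) (x j)) /\
   z = \sum_(j <- s) x j.
Proof.
move=> fz; have [s [w [nd hw e]]] := ndec z.
exists s, w; split => // j hj; split => //.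
case: hds => _ huniq; apply: (huniq s (fun j => f (w j))) => //.
  by move=> l _; apply: hinv.
by rewrite -linear_sum -e.
Qed.

Lemma orth_sum (U : I -> V -> Prop) s (x : I -> V) b :
  (forall j, List.In j s -> U j (x j)) -> (forall j y, U j y -> g y b = 0) ->
  g (\sum_(j <- s) x j) b = 0.
Proof.
move=> hx hb; rewrite (gsuml hg); apply: big0_In => j hj.
by apply: (hb j); apply: hx.
Qed.

Lemma orth_except (U : I -> V -> Prop) i b :
  (forall j y, j <> i -> U j y -> g y b = 0) ->
  orth g (sum_except U i) b.
Proof.
move=> h y [s [u [hne hu ->]]]; rewrite (gsuml hg); apply: big0_In => j hj.
by apply: (h j) => //; [apply: hne | apply: hu].
Qed.

Lemma except_to (U : I -> V -> Prop) i b :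
  orth g (sum_except U i) b -> forall j y, j <> i -> U j y -> g y b = 0.
Proof.
move=> h j y ji hy; apply: h; exists [:: j], (fun _ => y); split.
- by move=> l [<-|[]].
- by move=> l [<-|[]].
- by rewrite big_cons big_nil addr0.
Qed.

Lemma partA : (forall i, included (orth_in g (H i) (Im_on f (H i)))
                            (orth g (sum_except (fun j => Im_on f (H j)) i))) ->
  forall w, orth g (Defs.Im f) w -> fplus w = 0.
Proof.
move=> h1 w hw.
have [s [ww [nd hww ew]]] := ndec w.
have hex j : exists pr : V * V, [/\ Im_on f (H j) pr.1,
    orth_in g (H j) (Im_on f (H j)) pr.2 & ww j = pr.1 + pr.2].
  by have [x [y hxy]] := decM (hww j); exists (x, y).
have [p hp] := functional_choice _ hex.
pose a j := (p j).1; pose b j := (p j).2.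
have ha j : Im_on f (H j) (a j) by case: (hp j).
have hb j : orth_in g (H j) (Im_on f (H j)) (b j) by case: (hp j).
have hab j : ww j = a j + b j by case: (hp j).
have bperp j l y : Im_on f (H l) y -> g y (b j) = 0.
  move=> hy; case: (classic (l = j)) => [elj | nlj].
    by subst l; apply: (hb j).2.
  by apply: (except_to (h1 j (b j) (hb j)) nlj).
have sb : orth g (Defs.Im f) (\sum_(j <- s) b j).
  move=> y [v ->]; have [t [x [hx ->]]] := Min v.
  rewrite (gsuml hg); apply: big0_In => l _.
  rewrite (gsumr hg); apply: big0_In => j _.
  exact: (bperp j l).
have eA : \sum_(j <- s) a j = w - \sum_(j <- s) b j.
  by rewrite ew (eq_bigr _ (fun j _ => hab j)) big_split /= addrK.
have A0 : \sum_(j <- s) a j = 0.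
  apply: (gdef hg); rewrite {2}eA (gBr hg) sb ?subr0; last first.
    have : Defs.Im f (\sum_(j <- s) a j).
      apply: subsp_sum.
        split; first by exists 0; rewrite linear0.
          by move=> u v [x ->] [y ->]; exists (x + y); rewrite linearD.
        by move=> c u [x ->]; exists (c *: x); rewrite linearZ.
      by move=> j _; case: (ha j) => x [_ ->]; exists x.
    by [].
  apply: hw.
  apply: subsp_sum.
    split; first by exists 0; rewrite linear0.
      by move=> u v [x ->] [y ->]; exists (x + y); rewrite linearD.
    by move=> c u [x ->]; exists (c *: x); rewrite linearZ.
  by move=> j _; case: (ha j) => x [_ ->]; exists x.
have a0 : forall j, List.In j s -> a j = 0.
  case: hds => _ huniq; apply: huniq => //.
  by move=> j _; case: (ha j) => x [hx ->]; apply: hinv.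
rewrite ew linear_sum; apply: big0_In => j hj.
by rewrite hab linearD a0 // linear0 add0r; apply: (hplus j).2.
Qed.


Lemma partB : (forall i, included (orth_in g (H i) (Ker_on f (H i)))
                            (orth g (sum_except (fun j => Ker_on f (H j)) i))) ->
  forall v, orth g (Defs.Ker f) v -> fplus (f v) = v.
Proof.
move=> h2 v hv.
have [s [vv [nd hvv ev]]] := ndec v.
have hex j : exists pr : V * V, [/\ Ker_on f (H j) pr.1,
    orth_in g (H j) (Ker_on f (H j)) pr.2 & vv j = pr.1 + pr.2].
  by have [x [y hxy]] := decK (hvv j); exists (x, y).
have [p hp] := functional_choice _ hex.
pose a j := (p j).1; pose b j := (p j).2.
have ha j : Ker_on f (H j) (a j) by case: (hp j).
have hb j : orth_in g (H j) (Ker_on f (H j)) (b j) by case: (hp j).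
have hab j : vv j = a j + b j by case: (hp j).
have bperp j l y : Ker_on f (H l) y -> g y (b j) = 0.
  move=> hy; case: (classic (l = j)) => [elj | nlj].
    by subst l; apply: (hb j).2.
  by apply: (except_to (h2 j (b j) (hb j)) nlj).
have e1 : fplus (f v) = \sum_(j <- s) b j.
  rewrite ev !linear_sum; apply: big_eq_In => j _.
  rewrite hab linearD (ha j).2 add0r; apply: (hplus j).1; exact: hb.
have sb : orth g (Defs.Ker f) (\sum_(j <- s) b j).
  move=> y hy; have [t [x [hx ->]]] := Kin hy.
  rewrite (gsuml hg); apply: big0_In => l hl.
  rewrite (gsumr hg); apply: big0_In => j _.
  exact: (bperp j l _ (hx l hl)).
have eA : \sum_(j <- s) a j = v - \sum_(j <- s) b j.
  by rewrite ev (eq_bigr _ (fun j _ => hab j)) big_split /= addrK.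
have fA : f (\sum_(j <- s) a j) = 0.
  by rewrite linear_sum; apply: big0_In => j _; apply: (ha j).2.
have A0 : \sum_(j <- s) a j = 0.
  by apply: (gdef hg); rewrite {2}eA (gBr hg) hv // sb // subr0.
rewrite e1; apply/eqP; rewrite -subr_eq0 -opprB oppr_eq0 -eA A0.
done.
Qed.

Lemma fdag_char v : fdag (f v) = v -> orth g (Defs.Ker f) v.
Proof.
have [a [b [fa hb ->]]] := Kdec v.
rewrite linearD fa add0r (hdag.1 b hb) => e.
have -> : a = 0 by apply: (addIr b); rewrite -e add0r.
by rewrite add0r.
Qed.

Lemma main_eq : fplus =1 fdag <->
       ((forall i, included (orth_in g (H i) (Im_on f (H i)))
                            (orth g (sum_except (fun j => Im_on f (H j)) i)))
     /\ (forall i, included (orth_in g (H i) (Ker_on f (H i)))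
                            (orth g (sum_except (fun j => Ker_on f (H j)) i)))).
Proof.
split.
  move=> heq; split.
    move=> i q hq.
    have hqM : orth g (Defs.Im f) q.
      have [m [w [[u ->] hw eq]]] := Mdec q.
      have [kk [pp [fk hp eu]]] := Kdec u.
      have fq : fdag q = pp.
        by rewrite eq linearD (hdag.2 w hw) addr0 eu linearD fk add0r (hdag.1 pp hp).
      have pp0 : pp = 0 by rewrite -fq -heq; apply: (hplus i).2.
      by rewrite eq eu linearD fk pp0 linear0 !add0r.
    apply: orth_except => j y _ [x [_ ->]]; apply: hqM; by exists x.
  move=> i q hq.
  have hqK : orth g (Defs.Ker f) q.
    by apply: fdag_char; rewrite -heq; apply: (hplus i).1.
  by apply: orth_except => j y _ [_ fy]; apply: hqK.
case=> h1 h2 x.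
have [m [w [[u ->] hw ->]]] := Mdec x.
have [kk [pp [fk hp ->]]] := Kdec u.
rewrite !linearD fk linear0 add0r (partA h1 hw) (hdag.2 w hw) (partB h2 hp).
by rewrite linear0 (hdag.1 pp hp) add0r.
Qed.

End Thm.


Lemma thm_gen (k : numFieldType) (conj : {rmorphism k -> k}) :
  @Theorem_3_20_over k conj.
Proof.
move=> V g f I H fdag fplus hg hadm hH hfd hinv hds hdag hplus.
exact: (main_eq hg hadm hH hfd hinv hds hdag hplus).
Qed.

Theorem theorem3p20 (R : realType) :
  @Theorem_3_20_over (R : numFieldType) idfun /\
  @Theorem_3_20_over (R[i] : numFieldType) Num.conj.
Proof.
split.
  exact (@thm_gen _ (idfun : {rmorphism R -> R})).
exact (@thm_gen _ (Num.conj : {rmorphism R[i] -> R[i]})).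
Qed.
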